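(* For $n\ge 1$, the complete graph $K_n$ satisfies $\nu_*(K_n)=\frac{(n-1)n(n+1)(n+4)}{12}$.
   Context: For a finite simple graph $G=(V,E)$ with $\ell=|V|+|E|$, a construction sequence (c-sequence) is a bijection $x:\{1,\dots,\ell\}\to V\sqcup E$ such that every edge $e=uw$ satisfies $x^{-1}(e)>\max\{x^{-1}(u),x^{-1}(w)\}$. The cost of $x$ is $\nu(x)=\sum_{e=uw\in E}\big(2x^{-1}(e)-x^{-1}(u)-x^{-1}(w)\big)$, and $\nu_*(G)$ is the minimum of $\nu(x)$ over all c-sequences for $G$. *)

(* Defs.v *)
From mathcomp Require Import all_boot all_order all_algebra.
Set Implicit Arguments. Unset Strict Implicit. Unset Printing Implicit Defensive.

(* A finite simple graph: vertex set T (a finType), adjacency relation adj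
   (assumed symmetric and irreflexive where relevant).  An edge is a
   2-element set {u, w} with adj u w. *)
Definition is_edge (T : finType) (adj : rel T) (e : {set T}) : bool :=
  [exists u, exists w, (u != w) && adj u w && (e == [set u; w])].

Definition edge_t (T : finType) (adj : rel T) : finType :=
  {e : {set T} | is_edge adj e}.

Definition elem_t (T : finType) (adj : rel T) : finType :=
  (T + edge_t adj)%type.

Definition ell (T : finType) (adj : rel T) : nat := #|T| + #|edge_t adj|.

(* 1-based position x^{-1}(a) of a in the sequence x : {1..ell} -> V ⊔ E
   (indices shifted: 'I_ell is {0..ell-1}, so position = index + 1). *)
Definition pos (T : finType) (adj : rel T) (x : 'I_(ell adj) -> elem_t adj)
  (a : elem_t adj) : nat :=
  (index a (map x (enum 'I_(ell adj)))).+1.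

Definition cseq (T : finType) (adj : rel T) (x : 'I_(ell adj) -> elem_t adj)
  : Prop :=
  bijective x /\
  forall e : edge_t adj, forall u, u \in val e ->
    pos x (inl u) < pos x (inr e).

Definition cost (T : finType) (adj : rel T) (x : 'I_(ell adj) -> elem_t adj)
  : int :=
  (\sum_(e : edge_t adj)
     ((2 * pos x (inr e))%:Z - (\sum_(u in val e) pos x (inl u))%:Z))%R.

Definition nu_star_is (T : finType) (adj : rel T) (k : int) : Prop :=
  (exists x : 'I_(ell adj) -> elem_t adj, cseq x /\ cost x = k) /\
  (forall x : 'I_(ell adj) -> elem_t adj, cseq x -> (k <= cost x)%R).

Definition Kn_adj (n : nat) : rel 'I_n := fun i j => i != j.

(* Main.v *)
Require Import Defs.
From mathcomp Require Import all_boot all_order all_algebra.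
From mathcomp Require Import zify ring.
Set Implicit Arguments. Unset Strict Implicit. Unset Printing Implicit Defensive.

Lemma pos_x (T : finType) (adj : rel T) (x : 'I_(ell adj) -> elem_t adj) :
  injective x -> forall i, pos x (x i) = i.+1.
Proof. by move=> xi i; rewrite /pos index_map // index_enum_ord. Qed.

Lemma pos_inj (T : finType) (adj : rel T) (x : 'I_(ell adj) -> elem_t adj) :
  bijective x -> injective (pos x).
Proof.
case=> g xg gx a b.
by rewrite -(gx a) -(gx b) !pos_x; [move=> [/val_inj ->]| exact: can_inj xg|exact: can_inj xg].
Qed.

Lemma sum_pos (T : finType) (adj : rel T) (x : 'I_(ell adj) -> elem_t adj) :
  bijective x -> \sum_a pos x a = 'C((ell adj).+1, 2).
Proof.
move=> bx; rewrite (reindex x); last by apply: onW_bij.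
have xi : injective x by apply: bij_inj.
under eq_bigr do rewrite pos_x //.
by rewrite -bin2_sum big_nat_recl // big_mkord add0n.
Qed.

Lemma card_before (T : finType) (adj : rel T) (x : 'I_(ell adj) -> elem_t adj) :
  bijective x -> forall a, #|[pred b | pos x b < pos x a]| = (pos x a).-1.
Proof.
move=> bx a; have xi : injective x by apply: bij_inj.
case: (bx) => g xg gx.
rewrite -(gx a). rewrite (pos_x xi). rewrite -sum1_card (reindex x); last by apply: onW_bij.
rewrite /=.
under eq_bigl do rewrite inE (pos_x xi) ltnS.
rewrite (big_ord_narrow (ltnW (ltn_ord (g a)))).
by rewrite sum1_card card_ord.
Qed.

Lemma edge_card2 (T : finType) (adj : rel T) (e : edge_t adj) : #|val e| = 2.
Proof.
case: e => A /= /existsP [u /existsP [w /andP [/andP [uw _] /eqP ->]]].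
by apply/eqP/cards2P; exists u, w.
Qed.


Lemma is_edgeK n (A : {set 'I_n}) : is_edge (@Kn_adj n) A = (#|A| == 2).
Proof.
apply/idP/idP.
  move=> /existsP [u /existsP [w /andP [/andP [uw _] /eqP ->]]].
  by apply/cards2P; exists u, w.
move=> /cards2P [u [w [uw ->]]].
apply/existsP; exists u; apply/existsP; exists w.
by rewrite uw /Kn_adj uw eqxx.
Qed.

Lemma card_edges n : #|edge_t (@Kn_adj n)| = 'C(n,2).
Proof.
rewrite /edge_t card_sig -[n in 'C(n,_)]card_ord -card_draws.
by apply: eq_card => A; rewrite !inE is_edgeK.
Qed.

Lemma ell_K n : ell (@Kn_adj n) = 'C(n.+1, 2).
Proof. by rewrite /ell card_ord card_edges binS bin1 addnC. Qed.

Lemma degK n (u : 'I_n) : #|[set e : edge_t (@Kn_adj n) | u \in val e]| = n.-1.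
Proof.
rewrite -(card_imset _ val_inj).
have -> : [set val e | e in [set e : edge_t (@Kn_adj n) | u \in val e]]
   = [set [set u; w] | w in [set~ u]].
  apply/setP => A; apply/imsetP/imsetP.
    move=> [e]; rewrite inE => ue ->.
    move: (edge_card2 e) => /eqP /cards2P [a [b [ab eab]]].
    move: ue; rewrite eab !inE => /orP [] /eqP ue; subst u.
      exists b; first by rewrite !inE eq_sym.
      by [].
    exists a; first by rewrite !inE.
    by rewrite setUC.
  move=> [w]; rewrite !inE => wu ->.
  have He : is_edge (@Kn_adj n) [set u; w] by rewrite is_edgeK cards2 (eq_sym u) wu.
  exists (Sub [set u; w] He); last by [].
  by rewrite inE /= !inE eqxx.
rewrite card_in_imset ?cardsC1 ?card_ord //.
move=> w1 w2; rewrite !inE => w1u w2u E.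
have : w1 \in [set u; w2] by rewrite -E !inE eqxx orbT.
by rewrite !inE (negbTE w1u) => /eqP.
Qed.

Lemma sum_endpoints n (F : 'I_n -> nat) :
  \sum_(e : edge_t (@Kn_adj n)) \sum_(u in val e) F u = n.-1 * \sum_u F u.
Proof.
under eq_bigr do rewrite big_mkcond.
rewrite exchange_big /= big_distrr /=.
apply: eq_bigr => u _.
by rewrite -big_mkcond /= sum_nat_cond_const degK mulnC.
Qed.


Lemma cost_formula n (x : 'I_(ell (@Kn_adj n)) -> elem_t (@Kn_adj n)) :
  (1 <= n)%N -> bijective x ->
  cost x = ((2 * 'C((ell (@Kn_adj n)).+1, 2))%:Z
            - (n.+1 * \sum_v pos x (inl v))%:Z)%R.
Proof.
move=> n1 bx.
have Hs := sum_pos bx.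
rewrite big_sumType /= in Hs.
rewrite /cost GRing.sumrB.
rewrite -!(big_morph Posz PoszD (erefl (Posz 0))).
rewrite sum_endpoints -big_distrr /= -Hs.
set S := \sum_v _. set E := \sum_e _.
clearbody S E.
have -> : (n.+1 * E = n.-1 * E + 2 * E)%N by rewrite -mulnDl; congr (_ * _); lia.
rewrite !PoszD !PoszM. ring.
Qed.

Lemma pos_succ (T : finType) (adj : rel T) (x : 'I_(ell adj) -> elem_t adj) a :
  pos x a = (pos x a).-1.+1.
Proof. by []. Qed.

Lemma card_before_split n (x : 'I_(ell (@Kn_adj n)) -> elem_t (@Kn_adj n)) p :
  #|[pred b | pos x b < p]| =
  #|[set u | pos x (inl u) < p]| + #|[set e | pos x (inr e) < p]|.
Proof.
rewrite -(sum1_card [pred b : elem_t (@Kn_adj n) | pos x b < p]) big_sumType /=.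
by rewrite !sum1dep_card.
Qed.

Lemma vertex_bound n (x : 'I_(ell (@Kn_adj n)) -> elem_t (@Kn_adj n)) v :
  cseq x ->
  pos x (inl v) <= ('C(#|[set u | pos x (inl u) < pos x (inl v)]|.+1, 2)).+1.
Proof.
move=> [bx cx].
rewrite [X in X <= _]pos_succ -card_before // card_before_split ltnS binS bin1 [X in _ <= X]addnC leq_add2l.
rewrite -(card_imset _ val_inj) -cards_draws.
apply: subset_leq_card; apply/subsetP => A /imsetP [e He ->].
have {}He : pos x (inr e) < pos x (inl v).
  by move: He; rewrite (@in_set (edge_t (@Kn_adj n))).
rewrite in_set edge_card2 eqxx andbT.
apply/subsetP => u uin; rewrite inE.
exact: ltn_trans (cx e u uin) He.
Qed.

Definition Bset n (x : 'I_(ell (@Kn_adj n)) -> elem_t (@Kn_adj n)) (v : 'I_n) :=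
  [set u | pos x (inl u) < pos x (inl v)].

Lemma Bset_lt n (x : 'I_(ell (@Kn_adj n)) -> elem_t (@Kn_adj n)) v :
  #|Bset x v| < n.
Proof.
have : #|Bset x v| <= #|[set~ v]|.
  apply: subset_leq_card; apply/subsetP => u; rewrite !inE.
  by apply: contraTneq => ->; rewrite ltnn.
rewrite cardsC1 card_ord; have := ltn_ord v; lia.
Qed.

Lemma Bset_inj n (x : 'I_(ell (@Kn_adj n)) -> elem_t (@Kn_adj n)) :
  bijective x -> injective (fun v => #|Bset x v|).
Proof.
move=> bx u v /= E.
have key : forall a b : 'I_n, pos x (inl a) < pos x (inl b) -> #|Bset x a| < #|Bset x b|.
  move=> a b ab; apply: proper_card; apply/properP; split.
    apply/subsetP => w; rewrite !inE => wa; exact: ltn_trans wa ab.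
  by exists a; rewrite !inE ?ltnn.
case: (ltngtP (pos x (inl u)) (pos x (inl v))) => h.
- by have := key _ _ h; rewrite E ltnn.
- by have := key _ _ h; rewrite E ltnn.
- by move/(pos_inj bx): h => [].
Qed.

Definition gK (k : nat) := ('C(k.+1, 2)).+1.

Lemma sum_upper n (x : 'I_(ell (@Kn_adj n)) -> elem_t (@Kn_adj n)) :
  cseq x -> \sum_v pos x (inl v) <= \sum_(k < n) gK k.
Proof.
move=> cx; have bx := cx.1.
pose r (v : 'I_n) : 'I_n := Ordinal (Bset_lt x v).
have ri : injective r.
  by move=> u v /(congr1 val) /= /(Bset_inj bx).
have rb : bijective r by apply: inj_card_bij.
rewrite [X in _ <= X](reindex r); last by apply: onW_bij.
apply: leq_sum => v _; rewrite /gK /= /Bset. exact: vertex_bound.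
Qed.


Definition hiS n (A : {set 'I_n}) : nat := \max_(u in A) (u : nat).
Definition loS n (A : {set 'I_n}) : nat := \sum_(u in A) (u : nat) - hiS A.

Lemma hilo n (u w : 'I_n) : u < w -> hiS [set u; w] = w /\ loS [set u; w] = u.
Proof.
move=> uw.
have nuw : u \notin [set w] by rewrite inE neq_ltn uw.
rewrite /loS /hiS !big_setU1 // !big_set1 /=.
split; lia.
Qed.

Lemma edge_ends n (e : edge_t (@Kn_adj n)) :
  exists u w : 'I_n, u < w /\ val e = [set u; w].
Proof.
move: (edge_card2 e) => /eqP /cards2P [a [b [ab ->]]].
case: (ltngtP a b) => h.
- by exists a, b.
- by exists b, a; rewrite setUC.
- by move: ab; rewrite (val_inj h) eqxx.
Qed.

Lemma blk_step j j' a a' : a <= j -> j < j' -> 'C(j.+1,2) + a < 'C(j'.+1,2) + a'.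
Proof.
move=> aj jj.
have : 'C(j.+2,2) <= 'C(j'.+1,2) by apply: leq_bin2l.
rewrite binS bin1; lia.
Qed.

Lemma blk j j' a a' : a <= j -> a' <= j' -> 'C(j.+1,2) + a = 'C(j'.+1,2) + a' -> j = j'.
Proof.
move=> aj aj' E.
case: (ltngtP j j') => h //.
- by have := blk_step a' aj h; rewrite E ltnn.
- by have := blk_step a aj' h; rewrite E ltnn.
Qed.

Definition Pn n (a : elem_t (@Kn_adj n)) : nat :=
  match a with
  | inl v => 'C(v.+1, 2)
  | inr e => 'C((hiS (val e)).+1, 2) + (loS (val e)).+1
  end.

Lemma Pn_lt n (a : elem_t (@Kn_adj n)) : Pn a < ell (@Kn_adj n).
Proof.
rewrite ell_K; case: a => [v|e] /=.
  by have := blk_step 0 (leq0n v) (ltn_ord v); rewrite !addn0.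
have [u [w [uw ->]]] := edge_ends e.
have [-> ->] := hilo uw.
by have := blk_step 0 uw (ltn_ord w); rewrite !addn0.
Qed.

Lemma Pn_inj n : injective (@Pn n).
Proof.
case=> [v|e] [v'|e'] /=.
- move=> E; congr inl; apply: val_inj.
  by apply: (@blk v v' 0 0); rewrite ?addn0.
- have [u [w [uw ->]]] := edge_ends e'.
  have [-> ->] := hilo uw => E.
  have E' : 'C(v.+1,2) + 0 = 'C(w.+1,2) + u.+1 by rewrite addn0.
  have := blk (leq0n v) uw E'; move=> vw; move: E'; rewrite vw; lia.
- have [u [w [uw ->]]] := edge_ends e.
  have [-> ->] := hilo uw => E.
  have E' : 'C(v'.+1,2) + 0 = 'C(w.+1,2) + u.+1 by rewrite addn0.
  have := blk (leq0n v') uw E'; move=> vw; move: E'; rewrite vw; lia.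
- have [u [w [uw Ee]]] := edge_ends e.
  have [u' [w' [uw' Ee']]] := edge_ends e'.
  rewrite Ee Ee'; have [-> ->] := hilo uw; have [-> ->] := hilo uw' => E.
  have ww := blk uw uw' E.
  have uu : u = u' :> nat by move: E; rewrite ww; lia.
  congr inr; apply: val_inj; rewrite Ee Ee'.
  by rewrite (val_inj ww) (val_inj uu).
Qed.

Lemma construction n :
  exists x : 'I_(ell (@Kn_adj n)) -> elem_t (@Kn_adj n),
    cseq x /\ \sum_v pos x (inl v) = \sum_(k < n) gK k.
Proof.
pose Po (a : elem_t (@Kn_adj n)) : 'I_(ell (@Kn_adj n)) := Ordinal (Pn_lt a).
have Poi : injective Po by move=> a b /(congr1 val) /= /Pn_inj.
have card_le : #|'I_(ell (@Kn_adj n))| <= #|elem_t (@Kn_adj n)|.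
  by rewrite card_ord /elem_t card_sum.
have [g Pog gPo] := inj_card_bij Poi card_le.
have gi : injective g by apply: can_inj gPo.
have posg : forall a, pos g a = (Pn a).+1.
  by move=> a; rewrite -{1}(Pog a) (pos_x gi).
exists g; split.
  split; first by exists Po.
  move=> e u; rewrite !posg ltnS /=.
  have [u0 [w [uw Ee]]] := edge_ends e.
  rewrite Ee; have [-> ->] := hilo uw.
  rewrite !inE => /orP [] /eqP -> .
    have : 'C(u0.+1, 2) <= 'C(w.+1, 2) by apply: leq_bin2l; exact: ltnW.
    lia.
  lia.
by apply: eq_bigr => v _; rewrite posg.
Qed.


Lemma sumG n : \sum_(k < n) gK k = n + 'C(n.+1, 3).
Proof.
elim: n => [|n IH]; first by rewrite big_ord0.
rewrite big_ord_recr /= IH /gK [in RHS]binS; lia.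
Qed.

Lemma bin2E k : 2 * 'C(k.+1, 2) = k.+1 * k.
Proof.
elim: k => [|k IH] //.
rewrite binS bin1 mulnDr IH; lia.
Qed.

Lemma bin3E k : 6 * 'C(k.+2, 3) = k.+2 * k.+1 * k.
Proof.
elim: k => [|k IH] //.
rewrite binS mulnDr IH.
have := bin2E k.+1; lia.
Qed.

Lemma numeric m :
  ((2 * 'C(('C(m.+2,2)).+1, 2))%:Z - (m.+2 * \sum_(k < m.+1) gK k)%:Z)%R =
  intdiv.divz ((m.+1%:Z - 1) * m.+1%:Z * (m.+1%:Z + 1) * (m.+1%:Z + 4))%R 12.
Proof.
rewrite sumG bin2E.
set L := 'C(m.+2, 2). set Q := 'C(m.+2, 3).
have hL : (2 * L%:Z = m.+2%:Z * m.+1%:Z)%R by rewrite -!PoszM bin2E.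
have hQ : (6 * Q%:Z = m.+2%:Z * m.+1%:Z * m%:Z)%R by rewrite -!PoszM bin3E.
clearbody L Q.
set Y := (_ - _)%R.
have -> : ((m.+1%:Z - 1) * m.+1%:Z * (m.+1%:Z + 1) * (m.+1%:Z + 4) = Y * 12)%R.
  have e1 : (Y * 12 = 3 * ((2 * L%:Z + 2) * (2 * L%:Z)) - 12 * m.+2%:Z * m.+1%:Z
                - 2 * m.+2%:Z * (6 * Q%:Z))%R.
    by rewrite /Y !PoszM !PoszD; ring.
  rewrite e1 hL hQ.
  rewrite -[m.+2]addn2 -[m.+1]addn1 !PoszD; ring.
by rewrite intdiv.mulzK.
Qed.


Theorem theorem8 (n : nat) : (1 <= n)%N ->
  nu_star_is (@Kn_adj n)
    (intdiv.divz ((n%:Z - 1) * n%:Z * (n%:Z + 1) * (n%:Z + 4))%R 12).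
Proof.
case: n => [//|m] _.
have E : forall x : 'I_(ell (@Kn_adj m.+1)) -> elem_t (@Kn_adj m.+1), cseq x -> cost x =
   ((2 * 'C(('C(m.+2,2)).+1, 2))%:Z - (m.+2 * \sum_v pos x (inl v))%:Z)%R.
  move=> x cx; rewrite (cost_formula (ltn0Sn m) cx.1).
  by congr (Posz (2 * 'C(_.+1, 2)) - _)%R; rewrite ell_K.
split.
  have [x [cx hs]] := construction m.+1.
  by exists x; split => //; rewrite E // hs numeric.
move=> x cx; rewrite E // -numeric.
rewrite Num.Theory.lerD2l Num.Theory.lerN2 lez_nat leq_mul2l.
by rewrite sum_upper ?orbT.
Qed.
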